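(* $A(1)=\int_0^\infty\left(\frac1x-\frac{1}{e^x-1}\right)^2dx=2C-\frac12.$
   Context: $A(v)=\int_0^\infty\left(\frac{1}{xv}-\frac{1}{e^{xv}-1}\right)\left(\frac1x-\frac{1}{e^x-1}\right)dx$ for $v>0$. $C=\frac{\log(2\pi)-\gamma}{2}$, with $\gamma$ the Euler–Mascheroni constant. *)

(* Defs.v *)
From Stdlib Require Import Reals.
From Coquelicot Require Import Coquelicot.
Open Scope R_scope.

Definition harmonic (n : nat) : R := sum_f_R0 (fun k => / INR (S k)) (pred n).
Definition euler_gamma : R :=
  real (Lim_seq (fun n => harmonic n - ln (INR n))).

Definition C_const : R := (ln (2 * PI) - euler_gamma) / 2.

Definition A_integrand (v x : R) : R :=
  (/ (x * v) - / (exp (x * v) - 1)) * (/ x - / (exp x - 1)).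

(* Main.v *)
Require Import Defs.
From Stdlib Require Import Reals Lra Lia Psatz ZArith FunctionalExtensionality.
From Coquelicot Require Import Coquelicot.
Open Scope R_scope.

Lemma incr_deriv (f df : R -> R) a b : a <= b ->
  (forall x, a <= x <= b -> is_derive f x (df x)) ->
  (forall x, a <= x <= b -> 0 <= df x) -> f a <= f b.
Proof.
  intros Hab Hd Hp.
  destruct (MVT_gen f a b df) as [c [Hc Heq]].
  - intros x Hx. apply Hd. rewrite Rmin_left in Hx by lra. rewrite Rmax_right in Hx by lra. lra.
  - intros x Hx. apply continuity_pt_filterlim. apply (ex_derive_continuous (K:=R_AbsRing) (V:=R_NormedModule)).
    eexists. apply Hd. rewrite Rmin_left in Hx by lra. rewrite Rmax_right in Hx by lra. lra.
  - rewrite Rmin_left in Hc by lra. rewrite Rmax_right in Hc by lra.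
    assert (0 <= df c) by (apply Hp; lra). nra.
Qed.

Lemma exp_ge x : 1 + x <= exp x.
Proof. apply exp_ineq1_le. Qed.

Lemma exp_bound2 x : 0 <= x -> 1 - x^2/2 <= (1+x) * exp (-x).
Proof.
  intros Hx.
  assert (H := incr_deriv (fun t => (1+t)*exp(-t) - 1 + t^2/2) (fun t => t * (1 - exp(-t))) 0 x Hx).
  cbv beta in H. rewrite Ropp_0, exp_0 in H.
  assert (0 <= (1 + x) * exp (- x) - 1 + x^2 / 2) ; [|lra].
  eapply Rle_trans; [|apply H].
  - lra.
  - intros t Ht. auto_derive; auto. field.
  - intros t Ht. apply Rmult_le_pos; [lra|].
    assert (exp (-t) <= 1); [|lra]. rewrite <- exp_0. destruct (Req_dec t 0).
    + subst. rewrite Ropp_0. lra.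
    + left. apply exp_increasing. lra.
Qed.

Lemma exp_bound3 x : 0 <= x -> 0 <= exp x * (x - 1) + 1.
Proof.
  intros Hx.
  assert (H := incr_deriv (fun t => exp t * (t-1) + 1) (fun t => t * exp t) 0 x Hx).
  cbv beta in H. rewrite exp_0 in H.
  eapply Rle_trans; [|apply H].
  - lra.
  - intros t Ht. auto_derive; auto. ring.
  - intros t Ht. apply Rmult_le_pos; [lra|]. left; apply exp_pos.
Qed.

Lemma ln_le_x x : -1 < x -> ln (1 + x) <= x.
Proof.
  intros Hx. rewrite <- (ln_exp x) at 2. apply ln_le. lra. apply exp_ge.
Qed.

Lemma ln_lb2 x : 0 <= x -> x - x^2/2 <= ln (1+x).
Proof.
  intros Hx.
  assert (H := incr_deriv (fun t => ln (1+t) - t + t^2/2) (fun t => t^2/(1+t)) 0 x Hx).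
  cbv beta in H. rewrite Rplus_0_r, ln_1 in H.
  assert (0 <= ln (1+x) - x + x^2/2); [|lra].
  eapply Rle_trans; [|apply H].
  - lra.
  - intros t Ht. auto_derive. lra. field. lra.
  - intros t Ht. apply Rdiv_le_0_compat. nra. lra.
Qed.

Lemma ln_ub3 x : 0 <= x -> ln (1+x) <= x - x^2/2 + x^3/3.
Proof.
  intros Hx.
  assert (H := incr_deriv (fun t => t - t^2/2 + t^3/3 - ln (1+t)) (fun t => t^3/(1+t)) 0 x Hx).
  cbv beta in H. rewrite Rplus_0_r, ln_1 in H.
  assert (0 <= x - x^2/2 + x^3/3 - ln (1+x)); [|lra].
  eapply Rle_trans; [|apply H].
  - lra.
  - intros t Ht. auto_derive. lra. field. lra.
  - intros t Ht. apply Rdiv_le_0_compat. apply pow_le. lra. lra.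
Qed.

Definition eu (u : R) : R := exp (-u) / u.
Definition E (y : R) : R := RInt eu 1 y.

Lemma eu_cont u : 0 < u -> continuous eu u.
Proof.
  intros Hu. apply (ex_derive_continuous (K:=R_AbsRing) (V:=R_NormedModule)).
  unfold eu. auto_derive. lra.
Qed.

Lemma eu_ex a b : 0 < a -> 0 < b -> ex_RInt eu a b.
Proof.
  intros Ha Hb. apply (ex_RInt_continuous (V:=R_CompleteNormedModule)). intros z Hz. apply eu_cont.
  assert (0 < Rmin a b) by (apply Rmin_glb_lt; auto). lra.
Qed.

Lemma ball_R (x e y : R) : ball x e y -> x - e < y < x + e.
Proof.
  intros H. change (Rabs (y - x) < e) in H. apply Rabs_lt_between in H. lra.
Qed.

Lemma E_derive y : 0 < y -> is_derive E y (eu y).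
Proof.
  intros Hy. apply is_derive_RInt with 1.
  - exists (mkposreal (y/2) ltac:(lra)). intros b Hb. apply ball_R in Hb. simpl in Hb.
    apply (RInt_correct (V:=R_CompleteNormedModule)). apply eu_ex; lra.
  - apply eu_cont. auto.
Qed.

Lemma E_diff a b : 0 < a -> 0 < b -> E b - E a = RInt eu a b.
Proof.
  intros Ha Hb. unfold E.
  assert (H := RInt_Chasles eu 1 a b (eu_ex 1 a ltac:(lra) Ha) (eu_ex a b Ha Hb)).
  change (plus (RInt eu 1 a) (RInt eu a b)) with (RInt eu 1 a + RInt eu a b) in H. lra.
Qed.

Lemma cont_of_derive (f df : R -> R) x : is_derive f x (df x) -> continuous f x.
Proof.
  intros H. apply (ex_derive_continuous (K:=R_AbsRing) (V:=R_NormedModule)). eexists; eauto.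
Qed.

Lemma pos_seg a b z : 0 < a -> 0 < b -> Rmin a b <= z <= Rmax a b -> 0 < z.
Proof.
  intros Ha Hb Hz. assert (0 < Rmin a b) by (apply Rmin_glb_lt; auto). lra.
Qed.

Lemma int_inv c a b : 0 < a -> 0 < b -> is_RInt (fun u => c / u) a b (c * (ln b - ln a)).
Proof.
  intros Ha Hb.
  assert (H := is_RInt_derive (V:=R_CompleteNormedModule) (fun u => c * ln u) (fun u => c / u) a b).
  replace (c * (ln b - ln a)) with (minus (c * ln b) (c * ln a)).
  2:{ change (c * ln b - c * ln a = c * (ln b - ln a)). ring. }
  apply H.
  - intros x Hx. assert (0 < x) by (apply (pos_seg a b x Ha Hb Hx)). auto_derive. lra. field. lra.
  - intros x Hx. assert (0 < x) by (apply (pos_seg a b x Ha Hb Hx)).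
    apply (cont_of_derive _ (fun u => - c / u^2)). auto_derive. lra. field. lra.
Qed.

Lemma D_bounds a b x : 0 < a -> a <= b -> 0 < x ->
  exp (-(b*x)) * (ln b - ln a) <= E (b*x) - E (a*x) <= exp (-(a*x)) * (ln b - ln a).
Proof.
  intros Ha Hab Hx.
  assert (Hax : 0 < a*x) by nra. assert (Hbx : 0 < b*x) by nra.
  rewrite E_diff by auto.
  assert (HI := RInt_correct (V:=R_CompleteNormedModule) eu (a*x) (b*x) (eu_ex _ _ Hax Hbx)).
  assert (Hl : ln (b*x) - ln (a*x) = ln b - ln a).
  { rewrite !ln_mult by lra. ring. }
  assert (Hle : a * x <= b * x) by nra.
  split.
  - assert (H1 := int_inv (exp (-(b*x))) (a*x) (b*x) Hax Hbx). rewrite Hl in H1.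
    apply (is_RInt_le _ _ _ _ _ _ Hle H1 HI).
    intros u Hu. unfold eu. unfold Rdiv. apply Rmult_le_compat_r.
    left. apply Rinv_0_lt_compat. lra.
    destruct (Req_dec u (b*x)). subst; lra. left. apply exp_increasing. lra.
  - assert (H1 := int_inv (exp (-(a*x))) (a*x) (b*x) Hax Hbx). rewrite Hl in H1.
    apply (is_RInt_le _ _ _ _ _ _ Hle HI H1).
    intros u Hu. unfold eu. unfold Rdiv. apply Rmult_le_compat_r.
    left. apply Rinv_0_lt_compat. lra.
    left. apply exp_increasing. lra.
Qed.

Definition qf (x : R) : R := 1 - exp (-x) * (1 + x).
Definition hf (k x : R) : R := exp (-(k*x)) * qf x ^ 2.
Definition Tf (k x : R) : R := hf k x / x ^ 2.
Definition uf (k x : R) : R :=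
  -2 * exp (-((k+1)*x)) + (2*k+2)/(k+2) * exp (-((k+2)*x)) + (x + /(k+2)) * exp (-((k+2)*x)).
Definition Bf (k x : R) : R := (E ((k+1)*x) - E (k*x)) - (E ((k+2)*x) - E ((k+1)*x)).
Definition Ff (k x : R) : R := - hf k x / x + k * Bf k x + uf k x.

Lemma exp_k1 k x : exp (-((k+1)*x)) = exp (-(k*x)) * exp (-x).
Proof. rewrite <- exp_plus. f_equal. ring. Qed.
Lemma exp_k2 k x : exp (-((k+2)*x)) = exp (-(k*x)) * exp (-x) ^ 2.
Proof. simpl. rewrite Rmult_1_r, <- !exp_plus. f_equal. ring. Qed.

Lemma Ecx_derive c x : 0 < c -> 0 < x -> is_derive (fun t => E (c*t)) x (exp (-(c*x)) / x).
Proof.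
  intros Hc Hx.
  assert (H := is_derive_comp E (fun t => c*t) x (eu (c*x)) c (E_derive (c*x) ltac:(nra))).
  replace (exp (-(c*x)) / x) with (scal c (eu (c*x))). apply H.
  - auto_derive; auto. ring.
  - change (c * (exp (-(c*x)) / (c*x)) = exp (-(c*x)) / x). field. lra.
Qed.

Lemma Bf_derive k x : 0 < k -> 0 < x ->
  is_derive (Bf k) x ((2 * exp (-((k+1)*x)) - exp (-(k*x)) - exp (-((k+2)*x))) / x).
Proof.
  intros Hk Hx. unfold Bf.
  assert (H1 := Ecx_derive (k+1) x ltac:(lra) Hx).
  assert (H0 := Ecx_derive k x Hk Hx).
  assert (H2 := Ecx_derive (k+2) x ltac:(lra) Hx).
  assert (H := is_derive_minus _ _ _ _ _ (is_derive_minus _ _ _ _ _ H1 H0) (is_derive_minus _ _ _ _ _ H2 H1)).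
  eapply is_derive_ext; [|replace ((2 * exp (-((k+1)*x)) - exp (-(k*x)) - exp (-((k+2)*x))) / x) with
     (minus (minus (exp (-((k+1)*x))/x) (exp (-(k*x))/x)) (minus (exp (-((k+2)*x))/x) (exp (-((k+1)*x))/x))); [apply H|]].
  - intros t. reflexivity.
  - change ((exp (- ((k + 1) * x)) / x - exp (- (k * x)) / x) - (exp (- ((k + 2) * x)) / x - exp (- ((k + 1) * x)) / x) = (2 * exp (-((k+1)*x)) - exp (-(k*x)) - exp (-((k+2)*x))) / x).
    field. lra.
Qed.

Lemma G_derive k x : 0 <= k -> 0 < x ->
  is_derive (fun t => - hf k t / t + uf k t) x
    (Tf k x - k * ((2 * exp (-((k+1)*x)) - exp (-(k*x)) - exp (-((k+2)*x))) / x)).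
Proof.
  intros Hk Hx. unfold Tf, hf, qf, uf.
  auto_derive. lra.
  rewrite !exp_k1, !exp_k2.
  set (a := exp (-(k*x))). set (y := exp (-x)). simpl. field. lra.
Qed.

Lemma Ff_derive k x : 0 <= k -> 0 < x -> is_derive (Ff k) x (Tf k x).
Proof.
  intros Hk Hx.
  assert (HG := G_derive k x Hk Hx).
  destruct (Req_dec k 0) as [Hk0|Hk0].
  - subst k. eapply is_derive_ext.
    2:{ replace (Tf 0 x) with (Tf 0 x - 0 * ((2 * exp (-((0+1)*x)) - exp (-(0*x)) - exp (-((0+2)*x))) / x)) by ring; apply HG. }
    intros t. unfold Ff. cbv beta. match goal with |- ?a = ?b => change (@eq R a b) end. ring.
  - assert (HB := Bf_derive k x ltac:(lra) Hx).
    assert (H := is_derive_plus _ _ _ _ _ HG (is_derive_scal _ _ k _ HB)).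
    eapply is_derive_ext.
    2:{ replace (Tf k x) with (plus (Tf k x - k * ((2 * exp (-((k+1)*x)) - exp (-(k*x)) - exp (-((k+2)*x))) / x)) (k * ((2 * exp (-((k+1)*x)) - exp (-(k*x)) - exp (-((k+2)*x))) / x))). apply H.
        change (Tf k x - k * ((2 * exp (-((k+1)*x)) - exp (-(k*x)) - exp (-((k+2)*x))) / x) + k * ((2 * exp (-((k+1)*x)) - exp (-(k*x)) - exp (-((k+2)*x))) / x) = Tf k x). ring. }
    intros t. unfold Ff. change (- hf k t / t + uf k t + k * Bf k t = - hf k t / t + k * Bf k t + uf k t). match goal with |- ?a = ?b => change (@eq R a b) end. ring.
Qed.

Fixpoint rsum (f : nat -> R) (n : nat) : R :=
  match n with O => f O | S m => rsum f m + f (S m) end.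

Definition Lim0 (g : R -> R) (c : R) : Prop :=
  exists N, forall x, 0 < x <= 1 -> Rabs (g x - c) <= N * x.
Definition LimI (g : R -> R) : Prop :=
  exists M, forall x, 1 <= x -> Rabs (g x) <= M / x.

Lemma Lim0_plus f g cf cg : Lim0 f cf -> Lim0 g cg -> Lim0 (fun x => f x + g x) (cf + cg).
Proof.
  intros [N1 H1] [N2 H2]. exists (N1 + N2). intros x Hx.
  specialize (H1 x Hx). specialize (H2 x Hx).
  replace (f x + g x - (cf + cg)) with ((f x - cf) + (g x - cg)) by ring.
  eapply Rle_trans. apply Rabs_triang. lra.
Qed.

Lemma Lim0_scal f c a : Lim0 f c -> Lim0 (fun x => a * f x) (a * c).
Proof.
  intros [N H]. exists (Rabs a * N). intros x Hx.
  replace (a * f x - a * c) with (a * (f x - c)) by ring. rewrite Rabs_mult.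
  rewrite Rmult_assoc. apply Rmult_le_compat_l. apply Rabs_pos. auto.
Qed.

Lemma Lim0_ext f g c : (forall x, 0 < x -> f x = g x) -> Lim0 f c -> Lim0 g c.
Proof.
  intros He [N H]. exists N. intros x Hx. rewrite <- He by lra. auto.
Qed.

Lemma LimI_plus f g : LimI f -> LimI g -> LimI (fun x => f x + g x).
Proof.
  intros [N1 H1] [N2 H2]. exists (N1 + N2). intros x Hx.
  specialize (H1 x Hx). specialize (H2 x Hx).
  eapply Rle_trans. apply Rabs_triang.
  replace ((N1 + N2)/x) with (N1/x + N2/x) by (field; lra). lra.
Qed.

Lemma LimI_scal f a : LimI f -> LimI (fun x => a * f x).
Proof.
  intros [N H]. exists (Rabs a * N). intros x Hx.
  rewrite Rabs_mult. unfold Rdiv. rewrite Rmult_assoc. apply Rmult_le_compat_l. apply Rabs_pos. apply H; auto.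
Qed.

Lemma LimI_ext f g : (forall x, 0 < x -> f x = g x) -> LimI f -> LimI g.
Proof.
  intros He [N H]. exists N. intros x Hx. rewrite <- He by lra. auto.
Qed.

Lemma Lim0_rsum (f : nat -> R -> R) (c : nat -> R) n :
  (forall k, Lim0 (f k) (c k)) -> Lim0 (fun x => rsum (fun k => f k x) n) (rsum c n).
Proof.
  intros H. induction n; simpl. apply H. apply Lim0_plus; auto.
Qed.

Lemma LimI_rsum (f : nat -> R -> R) n :
  (forall k, LimI (f k)) -> LimI (fun x => rsum (fun k => f k x) n).
Proof.
  intros H. induction n; simpl. apply H. apply LimI_plus; auto.
Qed.

Lemma exp_le1 t : 0 <= t -> exp (-t) <= 1.
Proof.
  intros Ht. rewrite <- exp_0. destruct (Req_dec t 0). subst. rewrite Ropp_0. lra.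
  left. apply exp_increasing. lra.
Qed.

Lemma one_m_exp t : 0 <= t -> 0 <= 1 - exp (-t) <= t.
Proof.
  intros Ht. split. generalize (exp_le1 t Ht). lra. generalize (exp_ge (-t)). lra.
Qed.

Lemma exp_x_le1 x : 0 <= x -> x * exp (-x) <= 1.
Proof.
  intros Hx. rewrite exp_Ropp. generalize (exp_ge x) (exp_pos x). intros H1 H2.
  apply (Rmult_le_reg_r (exp x)); auto. rewrite Rmult_assoc, Rinv_l by lra. lra.
Qed.

Lemma exp_mono_le a b : a <= b -> exp a <= exp b.
Proof. intros H. destruct (Req_dec a b). subst; lra. left; apply exp_increasing; lra. Qed.

Lemma qf_bounds x : 0 <= x -> 0 <= qf x <= x^2/2 /\ qf x <= 1.
Proof.
  intros Hx. unfold qf. generalize (exp_bound2 x Hx). intros H.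
  assert (exp (-x) * (1+x) <= 1).
  { rewrite exp_Ropp. generalize (exp_ge x) (exp_pos x). intros H1 H2.
    apply (Rmult_le_reg_r (exp x)); auto. rewrite Rmult_comm, <- Rmult_assoc, Rinv_r by lra. lra. }
  assert (0 <= exp (-x) * (1+x)) by (apply Rmult_le_pos; [left; apply exp_pos|lra]).
  split; [split|]; lra.
Qed.

Lemma hf_bounds k x : 0 <= k -> 0 <= x -> 0 <= hf k x <= x^4/4 /\ hf k x <= 1.
Proof.
  intros Hk Hx. unfold hf. destruct (qf_bounds x Hx) as [[H1 H2] H3].
  assert (He : exp (-(k*x)) <= 1) by (apply exp_le1; nra).
  assert (He0 : 0 < exp (-(k*x))) by apply exp_pos.
  assert (0 <= qf x ^2 <= (x^2/2)^2) by (split; [apply pow_le; auto| apply pow_incr; auto]).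
  assert (qf x ^ 2 <= 1) by (replace 1 with (1^2) by ring; apply pow_incr; auto).
  split; [split|].
  - apply Rmult_le_pos; lra.
  - replace (x^4/4) with ((x^2/2)^2) by field. apply Rle_trans with (1 * qf x ^2). apply Rmult_le_compat_r; lra. lra.
  - apply Rle_trans with (1 * qf x ^2). apply Rmult_le_compat_r; lra. lra.
Qed.

Lemma Lim0_h k : 0 <= k -> Lim0 (fun x => - hf k x / x) 0.
Proof.
  intros Hk. exists (/4). intros x Hx. destruct (hf_bounds k x Hk ltac:(lra)) as [[H1 H2] _].
  rewrite Rminus_0_r. unfold Rdiv. rewrite Rabs_mult, Rabs_Ropp, Rabs_pos_eq by lra.
  rewrite Rabs_pos_eq by (left; apply Rinv_0_lt_compat; lra).
  apply (Rmult_le_reg_r x). lra. rewrite Rmult_assoc, Rinv_l by lra.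
  assert (x^4 <= x^2) by (apply Rle_trans with (x^2*1); [replace (x^4) with (x^2*x^2) by ring; apply Rmult_le_compat_l; [apply pow_le; lra| replace 1 with (1^2) by ring; apply pow_incr; lra] | lra]).
  nra.
Qed.

Lemma LimI_h k : 0 <= k -> LimI (fun x => - hf k x / x).
Proof.
  intros Hk. exists 1. intros x Hx. destruct (hf_bounds k x Hk ltac:(lra)) as [[H1 H2] H3].
  unfold Rdiv. rewrite Rabs_mult, Rabs_Ropp, Rabs_pos_eq by lra.
  rewrite Rabs_pos_eq by (left; apply Rinv_0_lt_compat; lra).
  apply Rmult_le_compat_r. left; apply Rinv_0_lt_compat; lra. lra.
Qed.

Definition Dd (a b x : R) : R := E (b*x) - E (a*x).

Lemma ln_mono a b : 0 < a -> a <= b -> 0 <= ln b - ln a.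
Proof. intros. assert (ln a <= ln b) by (apply ln_le; lra). lra. Qed.

Lemma Lim0_D a b : 0 < a -> a <= b -> Lim0 (Dd a b) (ln b - ln a).
Proof.
  intros Ha Hab. exists (b * (ln b - ln a)). intros x Hx. unfold Dd.
  destruct (D_bounds a b x Ha Hab ltac:(lra)) as [H1 H2].
  assert (HL := ln_mono a b Ha Hab).
  assert (He : exp (-(a*x)) <= 1) by (apply exp_le1; nra).
  destruct (one_m_exp (b*x) ltac:(nra)) as [H3 H4].
  apply Rabs_le_between. split; nra.
Qed.

Lemma LimI_D a b : 0 < a -> a <= b -> LimI (Dd a b).
Proof.
  intros Ha Hab. exists ((ln b - ln a) / a). intros x Hx. unfold Dd.
  destruct (D_bounds a b x Ha Hab ltac:(lra)) as [H1 H2].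
  assert (HL := ln_mono a b Ha Hab).
  assert (He := exp_x_le1 (a*x) ltac:(nra)).
  assert (He0 := exp_pos (-(b*x))).
  apply Rabs_le_between. split.
  - assert (0 <= (ln b - ln a) / a / x) by (apply Rdiv_le_0_compat; [apply Rdiv_le_0_compat|]; lra). nra.
  - eapply Rle_trans. apply H2.
    replace ((ln b - ln a) / a / x) with ((ln b - ln a) * / (a * x)) by (field; lra).
    assert (exp (-(a*x)) <= / (a*x)).
    { apply (Rmult_le_reg_r (a*x)). nra. rewrite Rinv_l by nra. lra. }
    rewrite (Rmult_comm (ln b - ln a)). apply Rmult_le_compat_r; auto.
Qed.

Lemma Lim0_exp c : 0 <= c -> Lim0 (fun x => exp (-(c*x))) 1.
Proof.
  intros Hc. exists c. intros x Hx. destruct (one_m_exp (c*x) ltac:(nra)).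
  apply Rabs_le_between. split; nra.
Qed.

Lemma Lim0_xexp c : 0 <= c -> Lim0 (fun x => x * exp (-(c*x))) 0.
Proof.
  intros Hc. exists 1. intros x Hx. assert (H := exp_le1 (c*x) ltac:(nra)).
  assert (H0 := exp_pos (-(c*x))).
  apply Rabs_le_between. split; nra.
Qed.

Lemma LimI_exp c : 1 <= c -> LimI (fun x => exp (-(c*x))).
Proof.
  intros Hc. exists 1. intros x Hx.
  assert (H1 := exp_mono_le (-(c*x)) (-x) ltac:(nra)).
  assert (H2 := exp_x_le1 x ltac:(lra)). assert (H0 := exp_pos (-(c*x))).
  rewrite Rabs_pos_eq by lra. apply (Rmult_le_reg_r x). lra.
  unfold Rdiv. rewrite Rmult_assoc, Rinv_l by lra. nra.
Qed.

Lemma LimI_xexp c : 2 <= c -> LimI (fun x => x * exp (-(c*x))).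
Proof.
  intros Hc. exists 1. intros x Hx.
  assert (H1 := exp_mono_le (-(c*x)) (-x + -x) ltac:(nra)).
  rewrite exp_plus in H1.
  assert (H2 := exp_x_le1 x ltac:(lra)). assert (H0 := exp_pos (-(c*x))).
  assert (H3 := exp_pos (-x)).
  rewrite Rabs_pos_eq by nra. apply (Rmult_le_reg_r x). lra.
  replace (1/x*x) with 1 by (field; lra).
  assert (0 <= x * exp (-x)) by nra.
  assert (x * exp (-x) * (x * exp (-x)) <= 1) by (apply Rle_trans with (1*1); [apply Rmult_le_compat|]; lra).
  assert (x*x*exp(-(c*x)) <= x*x*(exp(-x)*exp(-x))) by (apply Rmult_le_compat_l; nra). nra.
Qed.

Definition ck (k : R) : R :=
  0 + k * ((ln (k+1) - ln k) - (ln (k+2) - ln (k+1))) +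
  (-2 * 1 + (2*k+2)/(k+2) * 1 + 0 + /(k+2) * 1).

Lemma Lim0_u k : 0 <= k -> Lim0 (uf k) (-2 * 1 + (2*k+2)/(k+2) * 1 + 0 + /(k+2) * 1).
Proof.
  intros Hk. eapply Lim0_ext.
  2:{ apply Lim0_plus. apply Lim0_plus. apply Lim0_plus.
      apply Lim0_scal. apply (Lim0_exp (k+1)); lra.
      apply Lim0_scal. apply (Lim0_exp (k+2)); lra.
      apply (Lim0_xexp (k+2)); lra.
      apply Lim0_scal. apply (Lim0_exp (k+2)); lra. }
  intros x Hx. unfold uf. ring.
Qed.

Lemma LimI_u k : 0 <= k -> LimI (uf k).
Proof.
  intros Hk. apply LimI_ext with (f := fun x => -2 * exp(-((k+1)*x)) + (2*k+2)/(k+2) * exp(-((k+2)*x)) + x * exp(-((k+2)*x)) + /(k+2) * exp(-((k+2)*x))).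
  2:{ apply LimI_plus. apply LimI_plus. apply LimI_plus.
      apply LimI_scal. apply (LimI_exp (k+1)); lra.
      apply LimI_scal. apply (LimI_exp (k+2)); lra.
      apply (LimI_xexp (k+2)); lra.
      apply LimI_scal. apply (LimI_exp (k+2)); lra. }
  intros x Hx. unfold uf. ring.
Qed.

Lemma Lim0_B k : 0 < k -> Lim0 (Bf k) ((ln (k+1) - ln k) - (ln (k+2) - ln (k+1))).
Proof.
  intros Hk. replace ((ln (k+1) - ln k) - (ln (k+2) - ln (k+1))) with
    ((ln (k+1) - ln k) + -1 * (ln (k+2) - ln (k+1))) by ring.
  apply Lim0_ext with (f := fun x => Dd k (k+1) x + -1 * Dd (k+1) (k+2) x).
  { intros x _. unfold Bf, Dd. ring. }
  apply Lim0_plus. apply Lim0_D; lra. apply Lim0_scal. apply Lim0_D; lra.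
Qed.

Lemma LimI_B k : 0 < k -> LimI (Bf k).
Proof.
  intros Hk.
  apply LimI_ext with (f := fun x => Dd k (k+1) x + -1 * Dd (k+1) (k+2) x).
  { intros x _. unfold Bf, Dd. ring. }
  apply LimI_plus. apply LimI_D; lra. apply LimI_scal. apply LimI_D; lra.
Qed.

Lemma Lim0_F k : 0 <= k -> Lim0 (Ff k) (ck k).
Proof.
  intros Hk. unfold ck. apply Lim0_ext with (f := fun x => (- hf k x / x + k * Bf k x) + uf k x).
  { intros x _. reflexivity. }
  apply Lim0_plus; [apply Lim0_plus|].
  - apply Lim0_h; auto.
  - destruct (Req_dec k 0) as [H0|H0].
    + subst k. apply Lim0_ext with (f := fun x => 0).
      { intros; ring. }
      exists 0. intros x _. rewrite Rmult_0_l. replace (0 - 0) with 0 by ring. rewrite Rabs_R0. lra.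
    + apply (Lim0_scal (Bf k)). apply Lim0_B; lra.
  - apply Lim0_u; auto.
Qed.

Lemma LimI_F k : 0 <= k -> LimI (Ff k).
Proof.
  intros Hk. apply LimI_ext with (f := fun x => (- hf k x / x + k * Bf k x) + uf k x).
  { intros x _. reflexivity. }
  apply LimI_plus; [apply LimI_plus|].
  - apply LimI_h; auto.
  - destruct (Req_dec k 0) as [H0|H0].
    + subst k. apply LimI_ext with (f := fun x => 0).
      { intros; ring. }
      exists 0. intros x _. rewrite Rabs_R0. unfold Rdiv; lra.
    + apply (LimI_scal (Bf k)). apply LimI_B; lra.
  - apply LimI_u; auto.
Qed.

Definition Phi (n : nat) (x : R) : R := rsum (fun k => (INR k + 1) * Ff (INR k) x) n.
Definition Psum (n : nat) (x : R) : R := rsum (fun k => (INR k + 1) * Tf (INR k) x) n.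
Definition Cn (n : nat) : R := rsum (fun k => (INR k + 1) * ck (INR k)) n.

Lemma Phi_derive n x : 0 < x -> is_derive (Phi n) x (Psum n x).
Proof.
  intros Hx. unfold Phi, Psum. induction n; cbn [rsum].
  - apply (is_derive_scal (Ff (INR 0))). apply Ff_derive; auto. apply pos_INR.
  - apply (is_derive_plus (fun y => rsum (fun k => (INR k + 1) * Ff (INR k) y) n)
      (fun y => (INR (S n) + 1) * Ff (INR (S n)) y)). auto.
    apply (is_derive_scal (Ff (INR (S n)))). apply Ff_derive; auto. apply pos_INR.
Qed.

Lemma Tf_ex_derive k x : 0 < x -> ex_derive (Tf k) x.
Proof. intros Hx. unfold Tf, hf, qf. auto_derive. apply Rmult_integral_contrapositive; split; lra. Qed.

Lemma Psum_cont n x : 0 < x -> continuous (Psum n) x.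
Proof.
  intros Hx. apply (ex_derive_continuous (K:=R_AbsRing) (V:=R_NormedModule)).
  unfold Psum. induction n; cbn [rsum].
  - apply (ex_derive_scal (Tf (INR 0))). apply Tf_ex_derive; auto.
  - apply (ex_derive_plus (fun y => rsum (fun k => (INR k + 1) * Tf (INR k) y) n)
      (fun y => (INR (S n) + 1) * Tf (INR (S n)) y)). auto.
    apply (ex_derive_scal (Tf (INR (S n)))). apply Tf_ex_derive; auto.
Qed.

Lemma Phi_Lim0 n : Lim0 (Phi n) (Cn n).
Proof.
  unfold Phi, Cn. apply (Lim0_rsum (fun k x => (INR k + 1) * Ff (INR k) x)).
  intros k. apply (Lim0_scal (Ff (INR k))). apply Lim0_F. apply pos_INR.
Qed.

Lemma Phi_LimI n : LimI (Phi n).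
Proof.
  unfold Phi. apply (LimI_rsum (fun k x => (INR k + 1) * Ff (INR k) x)).
  intros k. apply (LimI_scal (Ff (INR k))). apply LimI_F. apply pos_INR.
Qed.

Definition fsq (x : R) : R := (/ x - / (exp x - 1)) ^ 2.

Lemma exp_INR k x : exp (-(INR k * x)) = exp (-x) ^ k.
Proof.
  induction k. simpl. rewrite Rmult_0_l, Ropp_0, exp_0. auto.
  rewrite S_INR, exp_k1, IHk. simpl. ring.
Qed.

Lemma Psum_closed n x : 0 < x ->
  Psum n x = fsq x * (1 - (INR n + 2) * exp (-x) ^ (S n) + (INR n + 1) * exp (-x) ^ (S (S n))).
Proof.
  intros Hx.
  assert (Hs : forall n, rsum (fun k => (INR k + 1) * exp (-x) ^ k) n * (1 - exp (-x))^2 =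
       1 - (INR n + 2) * exp (-x) ^ (S n) + (INR n + 1) * exp (-x) ^ (S (S n))).
  { intros m. induction m.
    - simpl. ring.
    - cbn [rsum]. rewrite Rmult_plus_distr_r, IHm, !S_INR. simpl. ring. }
  assert (Hf : fsq x * (1 - exp (-x))^2 = qf x ^ 2 / x ^ 2).
  { unfold fsq, qf. rewrite exp_Ropp.
    assert (H1 : 1 < exp x) by (generalize (exp_ineq1 x ltac:(lra)); lra).
    field. split; lra. }
  rewrite <- Hs.
  replace (fsq x * (rsum (fun k => (INR k + 1) * exp (-x) ^ k) n * (1 - exp (-x))^2)) with
    (rsum (fun k => (INR k + 1) * exp (-x) ^ k) n * (fsq x * (1 - exp (-x))^2)) by ring.
  rewrite Hf.
  unfold Psum. generalize n. intros m. induction m; cbn [rsum].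
  - unfold Tf, hf. rewrite exp_INR. field. lra.
  - rewrite IHm. unfold Tf, hf. rewrite exp_INR. field. lra.
Qed.

Lemma f_bounds x : 0 < x -> 0 <= / x - / (exp x - 1) <= 1.
Proof.
  intros Hx. assert (H1 : x < exp x - 1) by (generalize (exp_ineq1 x ltac:(lra)); lra).
  split.
  - assert (/ (exp x - 1) <= / x) by (apply Rinv_le_contravar; lra). lra.
  - assert (H3 := exp_bound3 x ltac:(lra)).
    assert (He : / x - / (exp x - 1) - 1 = - (exp x * (x - 1) + 1) / (x * (exp x - 1))) by (field; lra).
    assert (- (exp x * (x - 1) + 1) / (x * (exp x - 1)) <= 0).
    { unfold Rdiv. rewrite Ropp_mult_distr_l_reverse. apply Ropp_le_cancel. rewrite Ropp_0, Ropp_involutive.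
      apply Rmult_le_pos; auto. left; apply Rinv_0_lt_compat. nra. }
    lra.
Qed.

Lemma fsq_bounds x : 0 < x -> 0 <= fsq x <= 1.
Proof.
  intros Hx. destruct (f_bounds x Hx). unfold fsq. split. apply pow_le; auto.
  apply Rle_trans with (1^2). apply pow_incr; split; auto. simpl; lra.
Qed.

Lemma fsq_cont x : 0 < x -> continuous fsq x.
Proof.
  intros Hx. apply (ex_derive_continuous (K:=R_AbsRing) (V:=R_NormedModule)).
  assert (H1 : x < exp x - 1) by (generalize (exp_ineq1 x ltac:(lra)); lra).
  unfold fsq. auto_derive. split; lra.
Qed.

Lemma rem_bounds n x : 0 < x ->
  Psum n x <= fsq x <= Psum n x + exp (-((INR n + 1)*x)) * (1 + (INR n + 1) * x).
Proof.
  intros Hx. rewrite Psum_closed by auto.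
  destruct (fsq_bounds x Hx) as [F1 F2].
  assert (Hy : exp (-((INR n + 1)*x)) = exp (-x) ^ S n) by (rewrite <- exp_INR, S_INR; auto).
  assert (Hyx : 1 - exp (-x) <= x) by (destruct (one_m_exp x ltac:(lra)); lra).
  rewrite Hy. simpl pow.
  set (y := exp (-x)) in *. set (z := y ^ n).
  assert (Hy0 : 0 < y) by apply exp_pos. assert (Hy1 : y <= 1) by (apply exp_le1; lra).
  assert (Hz : 0 <= z) by (apply pow_le; lra).
  assert (HN := pos_INR n).
  assert (Hyz : 0 <= y * z) by nra.
  assert (Hk : 0 <= (INR n + 2) - (INR n + 1) * y) by nra.
  assert (Hk2 : (INR n + 2) - (INR n + 1) * y <= 1 + (INR n + 1) * x) by nra.
  replace (fsq x * (1 - (INR n + 2) * (y * z) + (INR n + 1) * (y * (y * z))))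
    with (fsq x - fsq x * (y * z) * ((INR n + 2) - (INR n + 1) * y)) by ring.
  split.
  - assert (0 <= fsq x * (y * z) * ((INR n + 2) - (INR n + 1) * y)).
    { apply Rmult_le_pos; auto. apply Rmult_le_pos; auto. }
    lra.
  - assert (fsq x * (y * z) * ((INR n + 2) - (INR n + 1) * y) <= 1 * (y * z) * (1 + (INR n + 1) * x)).
    { apply Rmult_le_compat; auto. apply Rmult_le_pos; auto. apply Rmult_le_compat_r; auto. }
    lra.
Qed.

Lemma exp_tail m a b : 0 < m -> 0 <= a ->
  is_RInt (fun x => exp (-(m*x)) * (1 + m*x)) a b
    ((exp (-(m*a)) * (2 + m*a) - exp (-(m*b)) * (2 + m*b)) / m).
Proof.
  intros Hm Ha.
  assert (H := is_RInt_derive (V:=R_CompleteNormedModule) (fun x => - exp (-(m*x)) * (2 + m*x) / m)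
     (fun x => exp (-(m*x)) * (1 + m*x)) a b).
  replace ((exp (-(m*a)) * (2 + m*a) - exp (-(m*b)) * (2 + m*b)) / m) with
    (minus (- exp (-(m*b)) * (2 + m*b) / m) (- exp (-(m*a)) * (2 + m*a) / m)).
  2:{ change (- exp (-(m*b)) * (2 + m*b) / m - (- exp (-(m*a)) * (2 + m*a) / m) =
      (exp (-(m*a)) * (2 + m*a) - exp (-(m*b)) * (2 + m*b)) / m). field. lra. }
  apply H.
  - intros x _. auto_derive. lra. field. lra.
  - intros x _. apply (ex_derive_continuous (K:=R_AbsRing) (V:=R_NormedModule)). auto_derive. auto.
Qed.

Lemma tail_le m a : 0 < m -> 0 <= a -> exp (-(m*a)) * (2 + m*a) <= 2.
Proof.
  intros Hm Ha. rewrite exp_Ropp. generalize (exp_ge (m*a)) (exp_pos (m*a)). intros H1 H2.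
  apply (Rmult_le_reg_r (exp (m*a))); auto.
  replace (/ exp (m * a) * (2 + m * a) * exp (m * a)) with (2 + m*a) by (field; lra). nra.
Qed.

Lemma int_main n a b : 0 < a -> a <= b ->
  is_RInt fsq a b (RInt fsq a b) /\
  Phi n b - Phi n a <= RInt fsq a b <= Phi n b - Phi n a + 2 / (INR n + 1).
Proof.
  intros Ha Hab.
  assert (Hseg : forall x, Rmin a b <= x <= Rmax a b -> 0 < x).
  { intros x Hx. rewrite Rmin_left in Hx by lra. lra. }
  assert (HP : is_RInt (Psum n) a b (Phi n b - Phi n a)).
  { apply (is_RInt_derive (V:=R_CompleteNormedModule) (Phi n) (Psum n)).
    - intros x Hx. apply Phi_derive. auto.
    - intros x Hx. apply Psum_cont. auto. }
  assert (HF : is_RInt fsq a b (RInt fsq a b)).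
  { apply (RInt_correct (V:=R_CompleteNormedModule)). apply (ex_RInt_continuous (V:=R_CompleteNormedModule)).
    intros x Hx. apply fsq_cont. auto. }
  assert (HN := pos_INR n).
  assert (HT := exp_tail (INR n + 1) a b ltac:(lra) ltac:(lra)).
  assert (HS := is_RInt_plus _ _ _ _ _ _ HP HT).
  split; auto. split.
  - apply (is_RInt_le _ _ _ _ _ _ Hab HP HF). intros x Hx. apply rem_bounds. lra.
  - assert (RInt fsq a b <= plus (Phi n b - Phi n a) ((exp (-((INR n + 1)*a)) * (2 + (INR n + 1)*a) - exp (-((INR n + 1)*b)) * (2 + (INR n + 1)*b)) / (INR n + 1))).
    { apply (is_RInt_le _ _ _ _ _ _ Hab HF HS). intros x Hx. change (fsq x <= Psum n x + exp (-((INR n + 1)*x)) * (1 + (INR n + 1) * x)). apply rem_bounds. lra. }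
    change (plus ?u ?v) with (u + v) in H.
    assert (exp (-((INR n + 1)*a)) * (2 + (INR n + 1)*a) <= 2) by (apply tail_le; lra).
    assert (0 < exp (-((INR n + 1)*b)) * (2 + (INR n + 1)*b)).
    { apply Rmult_lt_0_compat. apply exp_pos. nra. }
    assert ((exp (-((INR n + 1)*a)) * (2 + (INR n + 1)*a) - exp (-((INR n + 1)*b)) * (2 + (INR n + 1)*b)) / (INR n + 1) <= 2 / (INR n + 1)).
    { unfold Rdiv. apply Rmult_le_compat_r. left; apply Rinv_0_lt_compat; lra. lra. }
    lra.
Qed.

Definition Vn (n : nat) : R := - Cn n.

Lemma Delta_lim n eps : 0 < eps -> exists d M, 0 < d <= 1 /\ 1 <= M /\
  forall a b, 0 < a < d -> M < b -> Rabs (Phi n b - Phi n a - Vn n) < eps.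
Proof.
  intros He. destruct (Phi_Lim0 n) as [N HN]. destruct (Phi_LimI n) as [K HK].
  set (d := Rmin 1 (eps / (2 * (Rabs N + 1)))).
  set (M := Rmax 1 (2 * (Rabs K + 1) / eps)).
  assert (HN0 := Rabs_pos N). assert (HK0 := Rabs_pos K).
  assert (Hd : 0 < d) by (apply Rmin_glb_lt; [lra| apply Rdiv_lt_0_compat; lra]).
  exists d, M. split; [split; [auto| apply Rmin_l]|]. split; [apply Rmax_l|].
  intros a b Ha Hb.
  assert (Hd1 : d <= 1) by apply Rmin_l.
  assert (Hd2 : d <= eps / (2 * (Rabs N + 1))) by apply Rmin_r.
  assert (HM1 : 1 <= M) by apply Rmax_l.
  assert (HM2 : 2 * (Rabs K + 1) / eps <= M) by apply Rmax_r.
  specialize (HN a ltac:(lra)). specialize (HK b ltac:(lra)).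
  assert (H1 : N * a <= eps / 2).
  { apply Rle_trans with (Rabs N * a). apply Rmult_le_compat_r; [lra| apply Rle_abs].
    apply Rle_trans with ((Rabs N + 1) * (eps / (2 * (Rabs N + 1)))).
    apply Rmult_le_compat; lra. right. field. lra. }
  assert (H2 : K / b < eps / 2).
  { apply Rle_lt_trans with (Rabs K / b). unfold Rdiv. apply Rmult_le_compat_r.
    left; apply Rinv_0_lt_compat; lra. apply Rle_abs.
    apply (Rmult_lt_reg_r b). lra. replace (Rabs K / b * b) with (Rabs K) by (field; lra).
    assert (2 * (Rabs K + 1) < eps * b).
    { apply (Rmult_lt_reg_r (/eps)). apply Rinv_0_lt_compat; lra.
      replace (eps * b * / eps) with b by (field; lra). unfold Rdiv in HM2. lra. }
    lra. }
  unfold Vn. replace (Phi n b - Phi n a - - Cn n) with (Phi n b - (Phi n a - Cn n)) by ring.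
  eapply Rle_lt_trans. apply Rabs_triang. rewrite Rabs_Ropp. lra.
Qed.

Lemma le_eps x y : (forall e, 0 < e -> x <= y + e) -> x <= y.
Proof.
  intros H. destruct (Rle_dec x y); auto. specialize (H ((x - y)/2) ltac:(lra)). lra.
Qed.

Lemma V_close n m : Rabs (Vn n - Vn m) <= 2 / (INR n + 1) + 2 / (INR m + 1).
Proof.
  apply le_eps. intros e He.
  destruct (Delta_lim n (e/2) ltac:(lra)) as [d1 [M1 [Hd1 [HM1 H1]]]].
  destruct (Delta_lim m (e/2) ltac:(lra)) as [d2 [M2 [Hd2 [HM2 H2]]]].
  set (a := Rmin d1 d2 / 2). set (b := Rmax M1 M2 + 1).
  assert (Ha : 0 < Rmin d1 d2) by (apply Rmin_glb_lt; lra).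
  assert (Ha1 := Rmin_l d1 d2). assert (Ha2 := Rmin_r d1 d2).
  assert (Hb1 := Rmax_l M1 M2). assert (Hb2 := Rmax_r M1 M2).
  specialize (H1 a b ltac:(unfold a; lra) ltac:(unfold b; lra)).
  specialize (H2 a b ltac:(unfold a; lra) ltac:(unfold b; lra)).
  destruct (int_main n a b ltac:(unfold a; lra) ltac:(unfold a, b; lra)) as [_ [I1 I2]].
  destruct (int_main m a b ltac:(unfold a; lra) ltac:(unfold a, b; lra)) as [_ [J1 J2]].
  apply Rabs_lt_between in H1. apply Rabs_lt_between in H2.
  apply Rabs_le_between. split; lra.
Qed.

Lemma inv_small e : 0 < e -> exists N : nat, forall n, (N <= n)%nat -> 2 / (INR n + 1) < e.
Proof.
  intros He. destruct (archimed (2 / e)) as [H _].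
  assert (Hz : (0 <= up (2/e))%Z).
  { apply le_IZR. assert (0 < 2/e) by (apply Rdiv_lt_0_compat; lra). simpl; lra. }
  exists (Z.to_nat (up (2/e))). intros n Hn.
  apply le_INR in Hn. rewrite INR_IZR_INZ, Z2Nat.id in Hn by auto.
  apply (Rmult_lt_reg_r (INR n + 1)). generalize (pos_INR n); lra.
  replace (2 / (INR n + 1) * (INR n + 1)) with 2 by (field; generalize (pos_INR n); lra).
  apply (Rmult_lt_reg_r (/e)). apply Rinv_0_lt_compat; lra.
  replace (e * (INR n + 1) * / e) with (INR n + 1) by (field; lra). unfold Rdiv in H. lra.
Qed.

Lemma V_conv : exists l : R, is_lim_seq Vn l.
Proof.
  apply (proj2 (ex_lim_seq_cauchy_corr Vn)). intros [e He].
  destruct (inv_small (e/4) ltac:(lra)) as [N HN]. exists N. intros n m Hn Hm.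
  specialize (HN n Hn) as H1. specialize (HN m Hm) as H2. simpl.
  eapply Rle_lt_trans. apply V_close. lra.
Qed.

Lemma V_rate (l : R) : is_lim_seq Vn l -> forall n, Rabs (Vn n - l) <= 2 / (INR n + 1).
Proof.
  intros Hl n. apply le_eps. intros e He.
  apply is_lim_seq_spec in Hl. destruct (Hl (mkposreal (e/2) ltac:(lra))) as [N1 HN1].
  destruct (inv_small (e/2) ltac:(lra)) as [N2 HN2].
  set (m := Nat.max N1 N2).
  specialize (HN1 m (Nat.le_max_l _ _)). specialize (HN2 m (Nat.le_max_r _ _)). simpl in HN1.
  assert (H := V_close n m).
  replace (Vn n - l) with ((Vn n - Vn m) + (Vn m - l)) by ring.
  eapply Rle_trans. apply Rabs_triang. lra.
Qed.

Lemma RInt_gen_from (l : R) : is_lim_seq Vn l ->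
  is_RInt_gen fsq (at_right 0) (Rbar_locally p_infty) l.
Proof.
  intros Hl. unfold is_RInt_gen.
  apply filterlimi_lim_ext_loc with (f := fun ab => RInt fsq (fst ab) (snd ab)).
  - apply Filter_prod with (Q := fun a => 0 < a < 1) (R := fun b => 1 < b).
    + exists (mkposreal 1 ltac:(lra)). intros y Hy Hy0. apply ball_R in Hy. simpl in Hy. lra.
    + exists 1. auto.
    + intros a b Ha Hb. simpl. apply (int_main 0 a b); lra.
  - apply filterlim_locally. intros [e He].
    destruct (inv_small (e/3) ltac:(lra)) as [N HN]. specialize (HN N (Nat.le_refl N)).
    destruct (Delta_lim N (e/3) ltac:(lra)) as [d [M [Hd [HM H]]]].
    assert (HR := V_rate l Hl N).
    apply Filter_prod with (Q := fun a => 0 < a < d) (R := fun b => M < b).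
    + exists (mkposreal d ltac:(lra)). intros y Hy Hy0. apply ball_R in Hy. simpl in Hy. lra.
    + exists M. auto.
    + intros a b Ha Hb. simpl. specialize (H a b Ha Hb).
      destruct (int_main N a b ltac:(lra) ltac:(lra)) as [_ [I1 I2]].
      change (Rabs (RInt fsq a b - l) < e).
      apply Rabs_lt_between in H. apply Rabs_le_between in HR.
      apply Rabs_lt_between. split; lra.
Qed.

Fixpoint LF (n : nat) : R := match n with O => 0 | S m => LF m + ln (INR (S m)) end.
Fixpoint Hs (n : nat) : R := match n with O => 0 | S m => Hs m + / INR (S m) end.

Definition Wc (n : nat) : R :=
  2 * LF n - INR n * (INR n + 3) * ln (INR n + 1) + INR n * (INR n + 1) * ln (INR n + 2)
  + INR n + 2 - Hs (S (S n)).

Lemma Vn_closed n : Vn n = Wc n.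
Proof.
  unfold Vn, Cn, Wc. induction n.
  - cbn [rsum LF Hs]. unfold ck. simpl. field.
  - cbn [rsum LF Hs]. rewrite Ropp_plus_distr, IHn. cbn [LF Hs].
    unfold ck. rewrite !S_INR.
    set (r := INR n).
    replace (r + 1 + 1) with (r + 2) by ring.
    replace (r + 1 + 1 + 1) with (r + 3) by ring.
    replace (r + 1 + 2) with (r + 3) by ring.
    assert (0 <= r) by apply pos_INR.
    field. lra.
Qed.

Lemma inv_small2 c e : 0 < e -> exists N : nat, (1 <= N)%nat /\ forall n, (N <= n)%nat -> c / INR n < e.
Proof.
  intros He. destruct (archimed (Rabs c / e)) as [Hc _].
  assert (Hce : 0 <= Rabs c / e) by (apply Rdiv_le_0_compat; [apply Rabs_pos|lra]).
  assert (Hz : (0 <= up (Rabs c / e))%Z) by (apply le_IZR; simpl; lra).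
  exists (S (Z.to_nat (up (Rabs c / e)))). split. lia.
  intros n Hn.
  assert (H2 : IZR (up (Rabs c / e)) <= INR n).
  { rewrite <- (Z2Nat.id (up (Rabs c / e))) by auto. rewrite <- INR_IZR_INZ. apply le_INR. lia. }
  assert (Hn0 : 0 < INR n) by (apply lt_0_INR; lia).
  assert (Hc1 : c <= Rabs c) by apply Rle_abs.
  apply Rle_lt_trans with (Rabs c / INR n).
  { unfold Rdiv; apply Rmult_le_compat_r; [left; apply Rinv_0_lt_compat|]; lra. }
  apply (Rmult_lt_reg_r (INR n)). auto.
  replace (Rabs c / INR n * INR n) with (Rabs c) by (field; lra).
  assert (Rabs c / e < INR n) by lra.
  apply (Rmult_lt_reg_r (/e)). apply Rinv_0_lt_compat; lra.
  replace (e * INR n * / e) with (INR n) by (field; lra). unfold Rdiv in H. lra.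
Qed.

Lemma lim_bound (u : nat -> R) (l c : R) :
  (forall n, (1 <= n)%nat -> Rabs (u n - l) <= c / INR n) -> is_lim_seq u l.
Proof.
  intros H. apply is_lim_seq_spec. intros [e He].
  destruct (inv_small2 c e He) as [N [HN1 HN]]. exists N. intros n Hn. simpl.
  eapply Rle_lt_trans. apply H. lia. apply HN; auto.
Qed.

Lemma cauchy_conv (u : nat -> R) (c : R) :
  (forall n m, (1 <= n)%nat -> (n <= m)%nat -> Rabs (u n - u m) <= c / INR n) ->
  exists l : R, is_lim_seq u l.
Proof.
  intros H. apply (proj2 (ex_lim_seq_cauchy_corr u)). intros [e He].
  destruct (inv_small2 c e He) as [N [HN1 HN]]. exists N. intros n m Hn Hm. simpl.
  destruct (Nat.le_ge_cases n m).
  - eapply Rle_lt_trans. apply H; lia. apply HN; auto.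
  - rewrite Rabs_minus_sym. eapply Rle_lt_trans. apply H; lia. apply HN; auto.
Qed.

Lemma harmonic_Hs n : harmonic (S n) = Hs (S n).
Proof.
  unfold harmonic. simpl pred. induction n.
  - simpl. field.
  - rewrite tech5, IHn. cbn [Hs]. reflexivity.
Qed.

Definition dseq (n : nat) : R := Hs n - ln (INR n).

Lemma ln_step m : 0 < m -> 1 / (m+1) <= ln (m+1) - ln m <= 1 / m.
Proof.
  intros Hm. split.
  - assert (H := ln_le_x (- (1/(m+1))) ltac:(apply Ropp_lt_contravar in Hm; assert (0 < 1/(m+1)) by (apply Rdiv_lt_0_compat; lra);
      assert (1/(m+1) < 1) by (apply (Rmult_lt_reg_r (m+1)); [lra|]; field_simplify; lra); lra)).
    replace (1 + - (1 / (m + 1))) with (m / (m+1)) in H by (field; lra).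
    unfold Rdiv at 1 in H. rewrite ln_mult, ln_Rinv in H by (try apply Rinv_0_lt_compat; lra). lra.
  - assert (H := ln_le_x (1/m) ltac:(assert (0 < 1/m) by (apply Rdiv_lt_0_compat; lra); lra)).
    replace (1 + 1/m) with ((m+1) * / m) in H by (field; lra).
    rewrite ln_mult, ln_Rinv in H by (try apply Rinv_0_lt_compat; lra). lra.
Qed.

Lemma d_tele n k : (1 <= n)%nat -> 0 <= dseq n - dseq (n + k) <= 1 / INR n - 1 / INR (n + k).
Proof.
  intros Hn. induction k.
  - rewrite Nat.add_0_r. lra.
  - replace (n + S k)%nat with (S (n + k)) by lia.
    unfold dseq in *. cbn [Hs]. rewrite S_INR in *.
    assert (Hm : 0 < INR (n + k)) by (apply lt_0_INR; lia).
    destruct (ln_step (INR (n+k)) Hm).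
    assert (1 / (INR (n + k) + 1) = / (INR (n + k) + 1)) by (field; lra).
    split; lra.
Qed.

Lemma gamma_lim : is_lim_seq dseq euler_gamma.
Proof.
  destruct (cauchy_conv dseq 1) as [g Hg].
  { intros n m Hn Hnm. replace m with (n + (m - n))%nat by lia.
    destruct (d_tele n (m - n) Hn).
    assert (0 < 1 / INR (n + (m - n))) by (apply Rdiv_lt_0_compat; [lra| apply lt_0_INR; lia]).
    rewrite Rabs_pos_eq by lra. lra. }
  assert (He : is_lim_seq (fun n => harmonic n - ln (INR n)) g).
  { apply is_lim_seq_ext_loc with dseq; auto.
    exists 1%nat. intros n Hn. destruct n. lia. unfold dseq. rewrite harmonic_Hs. auto. }
  unfold euler_gamma. rewrite (is_lim_seq_unique _ _ He). simpl. auto.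
Qed.

Definition sseq (n : nat) : R := LF n - (INR n + 1/2) * ln (INR n) + INR n.
Definition rseq (n : nat) : R :=
  2 * INR n * (ln (INR n) - ln (INR n + 1)) +
  (INR n * (INR n + 1) * (ln (INR n + 2) - ln (INR n + 1)) - INR n) + 2
  - / (INR n + 1) - / (INR n + 2).

Lemma Wc_decomp n : Wc n = 2 * sseq n - dseq n + rseq n.
Proof.
  unfold Wc, sseq, dseq, rseq. cbn [Hs]. rewrite !S_INR.
  replace (INR n + 1 + 1) with (INR n + 2) by ring. field.
  assert (0 <= INR n) by apply pos_INR. lra.
Qed.

Lemma rseq_bound n : (1 <= n)%nat -> Rabs (rseq n - (- (1/2))) <= 5 / INR n.
Proof.
  intros Hn. assert (Hr : 1 <= INR n) by (apply (le_INR 1); auto).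
  set (r := INR n) in *.
  destruct (ln_step r ltac:(lra)) as [L1 L2].
  set (t := / (r + 1)).
  assert (Ht : 0 < t) by (apply Rinv_0_lt_compat; lra).
  assert (Hl : ln (r + 2) - ln (r + 1) = ln (1 + t)).
  { replace (r + 2) with ((r+1) * (1 + t)) by (unfold t; field; lra).
    rewrite ln_mult by (try apply Rplus_lt_0_compat; lra). ring. }
  assert (B1 := ln_lb2 t ltac:(lra)). assert (B2 := ln_ub3 t ltac:(lra)).
  assert (Hrr : 0 <= r * (r+1)) by nra.
  assert (C1 : r * (r+1) * (t - t^2/2) <= r * (r+1) * ln (1+t)) by (apply Rmult_le_compat_l; auto).
  assert (C2 : r * (r+1) * ln (1+t) <= r * (r+1) * (t - t^2/2 + t^3/3)) by (apply Rmult_le_compat_l; auto).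
  assert (E1 : r * (r+1) * (t - t^2/2) = r - r / (2*(r+1))) by (unfold t; field; lra).
  assert (E2 : r * (r+1) * (t^3/3) = r / (3 * (r+1)^2)) by (unfold t; field; lra).
  assert (Hq1 : 0 <= r / (2*(r+1)) <= 1/2) by (split; [apply Rdiv_le_0_compat; lra| apply (Rmult_le_reg_r (2*(r+1))); [lra|]; field_simplify; lra]).
  assert (Hq2 : 0 <= r / (3 * (r+1)^2) <= 1/(r+1)).
  { split. apply Rdiv_le_0_compat; nra. apply (Rmult_le_reg_r (3*(r+1)^2)). nra. field_simplify; nra. }
  assert (A1 : 2 * r * (ln r - ln (r + 1)) >= - 2) by (assert (r * (ln (r+1) - ln r) <= r * (1/r)) by (apply Rmult_le_compat_l; lra);
     replace (r * (1/r)) with 1 in H by (field; lra); lra).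
  assert (A2 : 2 * r * (ln r - ln (r + 1)) <= - 2 + 2 / (r+1)).
  { assert (r * (1/(r+1)) <= r * (ln (r+1) - ln r)) by (apply Rmult_le_compat_l; lra).
    replace (r * (1/(r+1))) with (1 - 1/(r+1)) in H by (field; lra). lra. }
  assert (I1 : 0 < / (r + 1) <= 1 / r) by (split; [apply Rinv_0_lt_compat; lra|]; unfold Rdiv; rewrite Rmult_1_l; apply Rinv_le_contravar; lra).
  assert (I2 : 0 < / (r + 2) <= 1 / r) by (split; [apply Rinv_0_lt_compat; lra|]; unfold Rdiv; rewrite Rmult_1_l; apply Rinv_le_contravar; lra).
  assert (I3 : 2 / (r+1) <= 2 / r) by (unfold Rdiv; apply Rmult_le_compat_l; [lra| apply Rinv_le_contravar; lra]).
  assert (I4 : 1 / (r+1) <= 1 / r) by (unfold Rdiv; apply Rmult_le_compat_l; [lra| apply Rinv_le_contravar; lra]).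
  assert (Ht1 : t = 1/(r+1)) by (unfold t; field; lra).
  unfold rseq. fold r. rewrite Hl. fold t.
  apply Rabs_le_between.
  replace (5 / r) with (2/r + 1/r + 1/r + 1/r) by (field; lra).
  assert (Hq1e : r / (2*(r+1)) = 1/2 - (1/2)*(1/(r+1))) by (field; lra). split; lra.
Qed.

Lemma rseq_lim : is_lim_seq rseq (- (1/2)).
Proof. apply (lim_bound rseq (- (1/2)) 5). apply rseq_bound. Qed.

Lemma sseq_lim (l : R) : is_lim_seq Vn l -> is_lim_seq sseq ((l + euler_gamma + 1/2) / 2).
Proof.
  intros Hl.
  assert (H := is_lim_seq_plus' _ _ _ _ (is_lim_seq_plus' _ _ _ _ Hl gamma_lim) (is_lim_seq_scal_l _ (-1) _ rseq_lim)).
  apply (is_lim_seq_scal_l _ (/2)) in H. simpl in H.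
  replace ((l + euler_gamma + 1/2) / 2) with (/2 * (l + euler_gamma + -1 * - (1/2))) by field.
  apply is_lim_seq_ext with (2 := H).
  intros n. rewrite Vn_closed, Wc_decomp. field.
Qed.

Definition Wl (n : nat) : R := RInt (fun x => sin x ^ n) 0 (PI/2).

Lemma Wl_is n : is_RInt (fun x => sin x ^ n) 0 (PI/2) (Wl n).
Proof.
  apply (RInt_correct (V:=R_CompleteNormedModule)). apply (ex_RInt_continuous (V:=R_CompleteNormedModule)).
  intros z _. apply (ex_derive_continuous (K:=R_AbsRing) (V:=R_NormedModule)). auto_derive. auto.
Qed.

Lemma is_RInt_eq (f : R -> R) a b u v : is_RInt f a b u -> is_RInt f a b v -> u = v.
Proof.
  intros H1 H2. rewrite <- (is_RInt_unique (V:=R_CompleteNormedModule) f a b u H1).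
  apply (is_RInt_unique (V:=R_CompleteNormedModule)). auto.
Qed.

Lemma Wl_rec n : (INR n + 2) * Wl (S (S n)) = (INR n + 1) * Wl n.
Proof.
  assert (H0 := is_RInt_derive (V:=R_CompleteNormedModule) (fun x => - cos x * sin x ^ (S n))
     (fun x => (INR n + 2) * sin x ^ (S (S n)) - (INR n + 1) * sin x ^ n) 0 (PI/2)).
  assert (H1 : is_RInt (fun x => (INR n + 2) * sin x ^ (S (S n)) - (INR n + 1) * sin x ^ n) 0 (PI/2) 0).
  { assert (Hv : minus (- cos (PI/2) * sin (PI/2) ^ (S n)) (- cos 0 * sin 0 ^ (S n)) = 0).
    { rewrite cos_PI2, sin_0. change (- 0 * sin (PI / 2) ^ S n - - cos 0 * 0 ^ S n = 0). simpl. ring. }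
    enough (HH : is_RInt (fun x => (INR n + 2) * sin x ^ (S (S n)) - (INR n + 1) * sin x ^ n) 0 (PI/2)
       (minus (- cos (PI/2) * sin (PI/2) ^ (S n)) (- cos 0 * sin 0 ^ (S n)))) by (rewrite Hv in HH; exact HH).
    apply H0.
    - intros x _. auto_derive. auto. change (match n with 0%nat => 1 | S _ => INR n + 1 end) with (INR (S n)). rewrite S_INR.
      assert (Hs := sin2_cos2 x). unfold Rsqr in Hs. cbn [pow].
      ring_simplify. replace (cos x ^ 2) with (1 - sin x ^ 2) by (simpl; lra). ring.
    - intros x _. apply (ex_derive_continuous (K:=R_AbsRing) (V:=R_NormedModule)). auto_derive. auto. }
  assert (H2 := is_RInt_minus _ _ _ _ _ _ (is_RInt_scal _ _ _ (INR n + 2) _ (Wl_is (S (S n))))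
                 (is_RInt_scal _ _ _ (INR n + 1) _ (Wl_is n))).
  assert (E := is_RInt_eq _ _ _ _ _ H1 H2).
  change (0 = (INR n + 2) * Wl (S (S n)) - (INR n + 1) * Wl n) in E. lra.
Qed.

Lemma Wl_0 : Wl 0 = PI / 2.
Proof.
  assert (H := is_RInt_const (V:=R_NormedModule) 0 (PI/2) 1).
  assert (E := is_RInt_eq _ _ _ _ _ (Wl_is 0) H).
  rewrite E. change ((PI/2 - 0) * 1 = PI/2). ring.
Qed.

Lemma Wl_1 : Wl 1 = 1.
Proof.
  assert (H := is_RInt_derive (V:=R_CompleteNormedModule) (fun x => - cos x) (fun x => sin x ^ 1) 0 (PI/2)).
  assert (H1 : is_RInt (fun x => sin x ^ 1) 0 (PI/2) (minus (- cos (PI/2)) (- cos 0))).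
  { apply H.
    - intros x _. auto_derive. auto. ring.
    - intros x _. apply (ex_derive_continuous (K:=R_AbsRing) (V:=R_NormedModule)). auto_derive. auto. }
  rewrite (is_RInt_eq _ _ _ _ _ (Wl_is 1) H1). rewrite cos_PI2, cos_0. change (- 0 - - 1 = 1). ring.
Qed.

Lemma sin_01 x : 0 <= x <= PI/2 -> 0 <= sin x <= 1.
Proof.
  intros Hx. split. apply sin_ge_0; generalize PI_RGT_0; lra. apply SIN_bound.
Qed.

Lemma Wl_decr n : Wl (S n) <= Wl n.
Proof.
  assert (Hp : 0 <= PI/2) by (generalize PI_RGT_0; lra).
  apply (is_RInt_le _ _ _ _ _ _ Hp (Wl_is (S n)) (Wl_is n)).
  intros x Hx. destruct (sin_01 x ltac:(lra)). cbn [pow].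
  assert (0 <= sin x ^ n) by (apply pow_le; auto). nra.
Qed.

Lemma Wl_nonneg n : 0 <= Wl n.
Proof.
  assert (H := is_RInt_const (V:=R_NormedModule) 0 (PI/2) 0).
  assert (Hp : 0 <= PI/2) by (generalize PI_RGT_0; lra).
  replace 0 with (scal (PI / 2 - 0) 0) at 1 by (change ((PI/2 - 0) * 0 = 0); ring).
  apply (is_RInt_le _ _ _ _ _ _ Hp H (Wl_is n)).
  intros x Hx. destruct (sin_01 x ltac:(lra)). apply pow_le; auto.
Qed.

Lemma Wl_inv n : (INR n + 1) * Wl (S n) * Wl n = PI / 2.
Proof.
  induction n.
  - rewrite Wl_0, Wl_1. simpl. ring.
  - rewrite S_INR. replace ((INR n + 1 + 1) * Wl (S (S n)) * Wl (S n)) with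
      (((INR n + 2) * Wl (S (S n))) * Wl (S n)) by ring.
    rewrite Wl_rec. rewrite <- IHn. ring.
Qed.

Lemma Wl_pos n : 0 < Wl n.
Proof.
  destruct (Rle_lt_or_eq_dec 0 (Wl n) (Wl_nonneg n)); auto.
  assert (H := Wl_inv n). rewrite <- e in H. generalize PI_RGT_0. intros. nra.
Qed.

Fixpoint cc (n : nat) : R := match n with O => 1 | S m => cc m * (2 * INR m + 1) / (2 * INR m + 2) end.

Lemma cc_pos n : 0 < cc n.
Proof.
  induction n; simpl cc. lra. assert (0 <= INR n) by apply pos_INR.
  apply Rdiv_lt_0_compat; [apply Rmult_lt_0_compat|]; lra.
Qed.

Lemma Wl_even n : Wl (2 * n) = PI / 2 * cc n.
Proof.
  induction n.
  - simpl. rewrite Wl_0. ring.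
  - replace (2 * S n)%nat with (S (S (2 * n))) by lia.
    assert (H := Wl_rec (2 * n)). rewrite mult_INR in H. simpl INR in H.
    cbn [cc]. rewrite IHn in H.
    assert (0 <= INR n) by apply pos_INR.
    apply (Rmult_eq_reg_l ((1 + 1) * INR n + 2)). 2: lra.
    rewrite H. field. lra.
Qed.

Lemma cc_bounds n : 2 / PI <= (2 * INR n + 1) * cc n ^ 2 <= 2 / PI * (1 + 1 / (2 * INR n + 1)).
Proof.
  assert (HN := pos_INR n). assert (HP := PI_RGT_0).
  assert (I := Wl_inv (2 * n)). rewrite mult_INR in I. simpl INR in I.
  assert (D1 := Wl_decr (2 * n)). assert (D2 := Wl_decr (S (2 * n))).
  assert (R := Wl_rec (2 * n)). rewrite mult_INR in R. simpl INR in R.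
  replace (2 * S n)%nat with (S (S (2 * n))) in * by lia.
  rewrite Wl_even in *.
  assert (Hc := cc_pos n).
  set (w := Wl (S (2 * n))) in *. set (c := cc n) in *.
  replace ((1+1) * INR n) with (2 * INR n) in * by ring.
  split.
  - apply (Rmult_le_reg_r (PI * PI / 4)). nra.
    replace (2 / PI * (PI * PI / 4)) with (PI / 2) by (field; lra).
    rewrite <- I. assert (w <= PI/2 * c) by lra.
    replace ((2 * INR n + 1) * c ^ 2 * (PI * PI / 4)) with ((2 * INR n + 1) * (PI/2 * c) * (PI/2 * c)) by field.
    apply Rmult_le_compat_r. nra. apply Rmult_le_compat_l. lra. auto.
  -
    assert (Hw : (2 * INR n + 1) / (2 * INR n + 2) * (PI/2 * c) <= w).
    { apply (Rmult_le_reg_l (2 * INR n + 2)). lra.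
      replace ((2 * INR n + 2) * ((2 * INR n + 1) / (2 * INR n + 2) * (PI/2 * c))) with ((2 * INR n + 1) * (PI/2 * c)) by (field; lra).
      rewrite <- R. replace (2 * INR n + 2) with (2 * INR n + 2) by ring.
      apply Rmult_le_compat_l; lra. }
    apply (Rmult_le_reg_r ((2 * INR n + 1) / (2 * INR n + 2) * (PI * PI / 4))).
    apply Rmult_lt_0_compat; [apply Rdiv_lt_0_compat|]; nra.
    replace (2 / PI * (1 + 1 / (2 * INR n + 1)) * ((2 * INR n + 1) / (2 * INR n + 2) * (PI * PI / 4))) with (PI/2) by (field; lra).
    rewrite <- I.
    replace ((2 * INR n + 1) * c ^ 2 * ((2 * INR n + 1) / (2 * INR n + 2) * (PI * PI / 4))) with
      ((2 * INR n + 1) * ((2 * INR n + 1) / (2 * INR n + 2) * (PI/2 * c)) * (PI/2 * c)) by (field; lra).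
    apply Rmult_le_compat_r. nra. apply Rmult_le_compat_l. lra. auto.
Qed.

Lemma ln_cc n : ln (cc n) = LF (2 * n) - 2 * LF n - 2 * INR n * ln 2.
Proof.
  induction n.
  - simpl. rewrite ln_1. ring.
  - replace (2 * S n)%nat with (S (S (2 * n))) by lia.
    cbn [cc LF]. assert (Hc := cc_pos n). assert (HN := pos_INR n).
    unfold Rdiv. rewrite ln_mult, ln_mult, ln_Rinv, IHn.
    all: try (try apply Rinv_0_lt_compat; try apply Rmult_lt_0_compat; lra).
    rewrite !S_INR, mult_INR. simpl INR.
    replace ((1+1) * INR n + 1 + 1) with (2 * (INR n + 1)) by ring.
    replace ((1+1) * INR n + 1) with (2 * INR n + 1) by ring.
    replace (2 * INR n + 2) with (2 * (INR n + 1)) by ring.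
    rewrite ln_mult by lra. ring.
Qed.

Lemma s_diff n : (1 <= n)%nat -> sseq (2 * n) - 2 * sseq n =
  / 2 * (ln ((2 * INR n + 1) * cc n ^ 2) + ln (INR n / (2 * INR n + 1)) - ln 2).
Proof.
  intros Hn. assert (Hr : 1 <= INR n) by (apply (le_INR 1); auto).
  assert (Hc := cc_pos n).
  unfold sseq. rewrite mult_INR. simpl INR.
  replace ((1+1) * INR n) with (2 * INR n) by ring.
  rewrite ln_mult, ln_div, ln_mult by (try apply pow_lt; lra).
  assert (H2 : LF (2 * n) = ln (cc n) + 2 * LF n + 2 * INR n * ln 2) by (rewrite ln_cc; ring).
  rewrite H2. replace (cc n ^ 2) with (cc n * cc n) by ring. rewrite ln_mult by lra.
  field.
Qed.

Lemma ln_cont x : 0 < x -> continuity_pt ln x.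
Proof.
  intros Hx. apply continuity_pt_filterlim.
  apply (ex_derive_continuous (K:=R_AbsRing) (V:=R_NormedModule)). auto_derive. auto.
Qed.

Lemma subseq2 (u : nat -> R) (l : R) : is_lim_seq u l -> is_lim_seq (fun n => u (2 * n)%nat) l.
Proof.
  intros H. apply (is_lim_seq_subseq u l (fun n => (2 * n)%nat)); auto.
  intros P [N HN]. exists N. intros n Hn. apply HN. lia.
Qed.

Lemma cc_lim : is_lim_seq (fun n => (2 * INR n + 1) * cc n ^ 2) (2 / PI).
Proof.
  apply (lim_bound _ _ (2 / PI)). intros n Hn.
  assert (Hr : 1 <= INR n) by (apply (le_INR 1); auto). assert (HP := PI_RGT_0).
  destruct (cc_bounds n) as [B1 B2].
  assert (2 / PI * (1 / (2 * INR n + 1)) <= 2 / PI / INR n).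
  { unfold Rdiv. rewrite Rmult_1_l. apply Rmult_le_compat_l. apply Rlt_le, Rdiv_lt_0_compat; lra.
    apply Rinv_le_contravar; lra. }
  apply Rabs_le_between. split. lra. lra.
Qed.

Lemma half_lim : is_lim_seq (fun n => INR n / (2 * INR n + 1)) (1/2).
Proof.
  apply (lim_bound _ _ 1). intros n Hn.
  assert (Hr : 1 <= INR n) by (apply (le_INR 1); auto).
  replace (INR n / (2 * INR n + 1) - 1/2) with (- (1 / (2 * (2 * INR n + 1)))) by (field; lra).
  rewrite Rabs_Ropp, Rabs_pos_eq by (apply Rlt_le, Rdiv_lt_0_compat; lra).
  unfold Rdiv. rewrite !Rmult_1_l. apply Rinv_le_contravar; lra.
Qed.

Lemma key (l : R) : is_lim_seq Vn l -> l = 2 * C_const - 1 / 2.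
Proof.
  intros Hl. assert (Hs := sseq_lim l Hl).
  set (sig := (l + euler_gamma + 1 / 2) / 2) in *.
  assert (H1 := is_lim_seq_plus' _ _ _ _ (subseq2 _ _ Hs) (is_lim_seq_scal_l _ (-2) _ Hs)).
  simpl in H1.
  assert (HP := PI_RGT_0).
  assert (L1 := is_lim_seq_continuous ln _ _ (ln_cont (2/PI) ltac:(apply Rdiv_lt_0_compat; lra)) cc_lim).
  assert (L2 := is_lim_seq_continuous ln _ _ (ln_cont (1/2) ltac:(lra)) half_lim).
  assert (H2 := is_lim_seq_scal_l _ (/2) _ (is_lim_seq_plus' _ _ _ _ (is_lim_seq_plus' _ _ _ _ L1 L2) (is_lim_seq_const (- ln 2)))).
  simpl in H2.
  assert (H3 : is_lim_seq (fun n => sseq (2 * n) + -2 * sseq n) (/ 2 * (ln (2 / PI) + ln (1 / 2) + - ln 2))).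
  { apply is_lim_seq_ext_loc with (2 := H2). exists 1%nat. intros n Hn.
    cbv beta. replace (sseq (2 * n) + -2 * sseq n) with (sseq (2 * n) - 2 * sseq n) by ring. rewrite s_diff by auto. replace (cc n * (cc n * 1)) with (cc n ^ 2) by ring. ring. }
  change (is_lim_seq (fun n => sseq (2 * n) + -2 * sseq n) (sig + -2 * sig)) in H1.
  assert (E := is_lim_seq_unique _ _ H1). rewrite (is_lim_seq_unique _ _ H3) in E.
  injection E. intros E'.
  rewrite ln_div, ln_div in E' by lra. rewrite ln_1 in E'.
  unfold C_const. rewrite ln_mult by lra.
  unfold sig in E'. lra.
Qed.

Theorem mainTheorem20 :
  is_RInt_gen (A_integrand 1)
    (at_right 0) (Rbar_locally p_infty) (2 * C_const - 1 / 2)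
  /\ (forall x, A_integrand 1 x = (/ x - / (exp x - 1)) ^ 2).
Proof.
  assert (Heq : forall x, A_integrand 1 x = fsq x).
  { intros x. unfold A_integrand, fsq. rewrite !Rmult_1_r. ring. }
  split; [| exact Heq].
  destruct V_conv as [l Hl]. rewrite <- (key l Hl).
  replace (A_integrand 1) with fsq.
  - apply RInt_gen_from; auto.
  - apply FunctionalExtensionality.functional_extensionality. intros x. symmetry. auto.
Qed.
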